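(* Let the timeline be $(\mathbb{Z},\leq)$, let $\Pi$ be a propositional DatalogMTL program, $\mathcal{D}$ a dataset in normal form, $Q$ a proposition and $t_B\le t_E$ integers. Let $B,E,Q'$ be fresh propositions and $\Pi^Q=\Pi\cup\{Q'\leftarrow Q\,\mathcal{U}_{[0,\infty)}\,E,\ \bot\leftarrow B\wedge Q'\}$. Then $Q@[t_B,t_E]$ is not entailed from $(\mathcal{D},\Pi)$ under the $s$-intersection semantics if and only if there exists a subset $\mathcal{D}'\subseteq\mathcal{D}$ such that (i) $\mathcal{D}'\cup\{B@\{t_B-1\},E@\{t_E+1\}\}$ is $\Pi^Q$-consistent, and (ii) for every fact $\varphi\in\mathcal{D}\setminus\mathcal{D}'$ there exists an $s$-repair $\mathcal{R}$ of $\mathcal{D}$ w.r.t. $\Pi$ with $\varphi\notin\mathcal{R}$.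
   Context: A propositional DatalogMTL program uses only nullary predicates. $\mathfrak{M},t\models A\,\mathcal{U}_\varrho A'$ iff there is $t'$ with $t'-t\in\varrho$, $\mathfrak{M},t'\models A'$, and $A$ holds at all $s\in(t,t')$. A dataset is a finite set of facts $P@\iota$ ($\iota$ a non-empty interval); $\Pi$-consistency and entailment are as usual. A set of facts is in normal form if it contains no two distinct facts $P@\iota_1,P@\iota_2$ with $\iota_1\cup\iota_2$ (as a set of integers) equal to the set of integers of an interval. An $s$-repair of $\mathcal{D}$ w.r.t. $\Pi$ is a $\subseteq$-maximal $\Pi$-consistent subset of $\mathcal{D}$. $Q@[t_B,t_E]$ is entailed under $s$-intersection semantics if $(\mathcal{I},\Pi)\models Q@[t_B,t_E]$ where $\mathcal{I}=\{P@\{t\}\mid \mathcal{R}\models P@\{t\}\text{ for every } s\text{-repair }\mathcal{R}\}$. *)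

(* Defs.v *)
From Stdlib Require Import ZArith List.
Import ListNotations.
Open Scope Z_scope.

Definition prop := nat.

(** Ranges of metric operators: non-negative intervals [lo, hi] (hi = None
    means +infinity).  Over the integers, open endpoints are expressible as
    closed ones. *)
Record range := mkRange { rlo : nat ; rhi : option nat }.

Definition in_range (r : range) (d : Z) : Prop :=
  Z.of_nat (rlo r) <= d /\
  match rhi r with Some h => d <= Z.of_nat h | None => True end.

Record interval := mkInterval { ilo : option Z ; ihi : option Z }.

Definition in_interval (i : interval) (t : Z) : Prop :=
  match ilo i with Some a => a <= t | None => True end /\
  match ihi i with Some b => t <= b | None => True end.

Definition nonempty_interval (i : interval) : Prop := exists t, in_interval i t.

Definition punct (t : Z) : interval := mkInterval (Some t) (Some t).
Definition closed_int (a b : Z) : interval := mkInterval (Some a) (Some b).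

Inductive matom :=
| MTop
| MBot
| MProp (p : prop)
| MBoxP (r : range) (m : matom)
| MBoxF (r : range) (m : matom)
| MDiaP (r : range) (m : matom)
| MDiaF (r : range) (m : matom)
| MSince (r : range) (m1 m2 : matom)
| MUntil (r : range) (m1 m2 : matom).

Inductive hatom :=
| HProp (p : prop)
| HBoxP (r : range) (h : hatom)
| HBoxF (r : range) (h : hatom).

Inductive head := HBot | HAtom (h : hatom).

Record rule := mkRule { rhead : head ; rbody : list matom }.
Definition program := list rule.

Record fact := mkFact { fpred : prop ; fint : interval }.
Definition factset := fact -> Prop.
Definition dataset := list fact.
Definition fs_of (D : list fact) : factset := fun f => In f D.

Definition interp := prop -> Z -> Prop.

Fixpoint sat_m (M : interp) (m : matom) (t : Z) : Prop :=
  match m with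
  | MTop => True
  | MBot => False
  | MProp p => M p t
  | MBoxP r m => forall s, in_range r (t - s) -> sat_m M m s
  | MBoxF r m => forall s, in_range r (s - t) -> sat_m M m s
  | MDiaP r m => exists s, in_range r (t - s) /\ sat_m M m s
  | MDiaF r m => exists s, in_range r (s - t) /\ sat_m M m s
  | MSince r m1 m2 => exists s, in_range r (t - s) /\ sat_m M m2 s /\
                        forall u, s < u < t -> sat_m M m1 u
  | MUntil r m1 m2 => exists s, in_range r (s - t) /\ sat_m M m2 s /\
                        forall u, t < u < s -> sat_m M m1 u
  end.

Fixpoint sat_h (M : interp) (h : hatom) (t : Z) : Prop :=
  match h with
  | HProp p => M p t
  | HBoxP r h => forall s, in_range r (t - s) -> sat_h M h s
  | HBoxF r h => forall s, in_range r (s - t) -> sat_h M h s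
  end.

Definition sat_head (M : interp) (h : head) (t : Z) : Prop :=
  match h with HBot => False | HAtom a => sat_h M a t end.

Definition sat_rule (M : interp) (r : rule) : Prop :=
  forall t, (forall b, In b (rbody r) -> sat_m M b t) -> sat_head M (rhead r) t.

Definition model_prog (M : interp) (P : program) : Prop :=
  forall r, In r P -> sat_rule M r.

Definition sat_fact (M : interp) (f : fact) : Prop :=
  forall t, in_interval (fint f) t -> M (fpred f) t.

Definition model_facts (M : interp) (F : factset) : Prop :=
  forall f, F f -> sat_fact M f.

Definition consistent (P : program) (F : factset) : Prop :=
  exists M, model_prog M P /\ model_facts M F.

Definition entails (P : program) (F : factset) (f : fact) : Prop :=
  forall M, model_prog M P -> model_facts M F -> sat_fact M f.

Definition is_dataset (D : dataset) : Prop :=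
  forall f, In f D -> nonempty_interval (fint f).

Definition subset_ds (D1 D2 : list fact) : Prop := forall f, In f D1 -> In f D2.

Definition normal_form (D : dataset) : Prop :=
  forall f1 f2, In f1 D -> In f2 D -> f1 <> f2 -> fpred f1 = fpred f2 ->
    ~ exists i : interval, forall t,
        (in_interval (fint f1) t \/ in_interval (fint f2) t) <-> in_interval i t.

Definition s_repair (P : program) (D R : dataset) : Prop :=
  subset_ds R D /\ consistent P (fs_of R) /\
  forall R', subset_ds R R' -> subset_ds R' D -> consistent P (fs_of R') ->
             subset_ds R' R.

Definition s_int_set (P : program) (D : dataset) : factset :=
  fun f => exists p t, f = mkFact p (punct t) /\
    forall R, s_repair P D R -> entails [] (fs_of R) (mkFact p (punct t)).

Definition s_int_entails (P : program) (D : dataset) (q : fact) : Prop :=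
  entails P (s_int_set P D) q.

Fixpoint occ_m (p : prop) (m : matom) : Prop :=
  match m with
  | MTop | MBot => False
  | MProp q => q = p
  | MBoxP _ m | MBoxF _ m | MDiaP _ m | MDiaF _ m => occ_m p m
  | MSince _ m1 m2 | MUntil _ m1 m2 => occ_m p m1 \/ occ_m p m2
  end.

Fixpoint occ_h (p : prop) (h : hatom) : Prop :=
  match h with
  | HProp q => q = p
  | HBoxP _ h | HBoxF _ h => occ_h p h
  end.

Definition occ_rule (p : prop) (r : rule) : Prop :=
  (match rhead r with HBot => False | HAtom h => occ_h p h end) \/
  exists b, In b (rbody r) /\ occ_m p b.

Definition occ_prog (p : prop) (P : program) : Prop := exists r, In r P /\ occ_rule p r.
Definition occ_ds (p : prop) (D : dataset) : Prop := exists f, In f D /\ fpred f = p.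

Definition PiQ (P : program) (Q B E Q' : prop) : program :=
  P ++ [ mkRule (HAtom (HProp Q')) [MUntil (mkRange 0 None) (MProp Q) (MProp E)] ;
         mkRule HBot [MProp B; MProp Q'] ].

(* Main.v *)
Require Import Defs.
From Stdlib Require Import ZArith List Lia Classical Setoid Morphisms.
Import ListNotations.
Open Scope Z_scope.

Lemma sat_m_ext (M M' : interp) (m : matom) :
  (forall q, occ_m q m -> forall t, M q t <-> M' q t) ->
  forall t, sat_m M m t <-> sat_m M' m t.
Proof.
  induction m; simpl; intros H t; try tauto.
  - apply H; reflexivity.
  - specialize (IHm H). setoid_rewrite IHm. reflexivity.
  - specialize (IHm H). setoid_rewrite IHm. reflexivity.
  - specialize (IHm H). setoid_rewrite IHm. reflexivity.
  - specialize (IHm H). setoid_rewrite IHm. reflexivity.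
  - assert (H1 : forall q, occ_m q m1 -> forall t, M q t <-> M' q t) by (intros; apply H; auto).
    assert (H2 : forall q, occ_m q m2 -> forall t, M q t <-> M' q t) by (intros; apply H; auto).
    specialize (IHm1 H1). specialize (IHm2 H2).
    setoid_rewrite IHm1. setoid_rewrite IHm2. reflexivity.
  - assert (H1 : forall q, occ_m q m1 -> forall t, M q t <-> M' q t) by (intros; apply H; auto).
    assert (H2 : forall q, occ_m q m2 -> forall t, M q t <-> M' q t) by (intros; apply H; auto).
    specialize (IHm1 H1). specialize (IHm2 H2).
    setoid_rewrite IHm1. setoid_rewrite IHm2. reflexivity.
Qed.

Lemma sat_h_ext (M M' : interp) (h : hatom) :
  (forall q, occ_h q h -> forall t, M q t <-> M' q t) ->
  forall t, sat_h M h t <-> sat_h M' h t.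
Proof.
  induction h; simpl; intros H t.
  - apply H; reflexivity.
  - specialize (IHh H). setoid_rewrite IHh. reflexivity.
  - specialize (IHh H). setoid_rewrite IHh. reflexivity.
Qed.

Lemma model_prog_ext (M M' : interp) (P : program) :
  (forall q, occ_prog q P -> forall t, M q t <-> M' q t) ->
  model_prog M P -> model_prog M' P.
Proof.
  intros H HM r Hr t Hb.
  assert (Hb' : forall b, In b (rbody r) -> sat_m M b t).
  { intros b Hin. apply (sat_m_ext M M' b).
    - intros q Hq. apply H. exists r. split; auto. right. exists b; auto.
    - apply Hb; auto. }
  specialize (HM r Hr t Hb').
  destruct (rhead r) eqn:Eh; simpl in *; auto.
  apply (sat_h_ext M M' h); auto.
  intros q Hq. apply H. exists r. split; auto. left. rewrite Eh. auto.
Qed.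

Lemma consistent_mono P (A B : list Defs.fact) :
  incl A B -> consistent P (fs_of B) -> consistent P (fs_of A).
Proof.
  intros Hi [M [H1 H2]]. exists M. split; auto.
  intros f Hf. apply H2. apply Hi. exact Hf.
Qed.

Lemma greedy P (l : list Defs.fact) : forall acc,
  consistent P (fs_of acc) ->
  exists R, incl acc R /\ incl R (acc ++ l) /\ consistent P (fs_of R) /\
    forall x, In x l -> ~ In x R -> ~ consistent P (fs_of (x :: R)).
Proof.
  induction l as [|x l IH]; intros acc Hc.
  - exists acc. split; [intros y Hy; auto|].
    split; [rewrite app_nil_r; intros y Hy; auto|].
    split; [auto|]. intros x [].
  - destruct (classic (consistent P (fs_of (x :: acc)))) as [Hx|Hx].
    + destruct (IH (x :: acc) Hx) as [R [H1 [H2 [H3 H4]]]].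
      exists R. split; [|split; [|split]]; auto.
      * intros y Hy; apply H1; right; auto.
      * intros y Hy. specialize (H2 y Hy). simpl in H2.
        apply in_or_app. destruct H2 as [<-|H2]; [right; left; auto|].
        apply in_app_or in H2. destruct H2; auto. right; right; auto.
      * intros y [<-|Hy] Hn; [exfalso; apply Hn; apply H1; left; auto|]. auto.
    + destruct (IH acc Hc) as [R [H1 [H2 [H3 H4]]]].
      exists R. split; [|split; [|split]]; auto.
      * intros y Hy. specialize (H2 y Hy). apply in_app_or in H2.
        apply in_or_app. destruct H2; auto. right; right; auto.
      * intros y [<-|Hy] Hn; auto.
        intros Hc'. apply Hx. eapply consistent_mono; [|exact Hc'].
        intros z [<-|Hz]; [left; auto| right; apply H1; auto].
Qed.

Lemma repair_exists P (D : dataset) :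
  consistent P (fs_of []) -> exists R, s_repair P D R.
Proof.
  intros Hc. destruct (greedy P D [] Hc) as [R [_ [H2 [H3 H4]]]].
  exists R. split; [exact H2|]. split; [exact H3|].
  intros R' HRR' HR'D HcR' x Hx.
  destruct (classic (In x R)) as [?|Hn]; auto.
  exfalso. apply (H4 x (HR'D x Hx) Hn).
  eapply consistent_mono; [|exact HcR'].
  intros z [<-|Hz]; auto.
Qed.

Lemma entails_empty (R : dataset) p t :
  entails [] (fs_of R) (mkFact p (punct t)) ->
  exists g, In g R /\ fpred g = p /\ in_interval (fint g) t.
Proof.
  intros H.
  set (M0 := fun q s => exists g, In g R /\ fpred g = q /\ in_interval (fint g) s).
  assert (Hm : model_prog M0 []) by (intros r []).
  assert (Hf : model_facts M0 (fs_of R)).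
  { intros f Hf s Hs. exists f; auto. }
  apply (H M0 Hm Hf t). unfold in_interval; simpl; lia.
Qed.

Lemma union_interval (g g1 : Defs.fact) t :
  in_interval (fint g) t -> in_interval (fint g1) t ->
  exists i : interval, forall s,
    (in_interval (fint g) s \/ in_interval (fint g1) s) <-> in_interval i s.
Proof.
  destruct g as [p [a b]], g1 as [p1 [a1 b1]]; simpl.
  exists (mkInterval
    (match a, a1 with Some x, Some y => Some (Z.min x y) | _, _ => None end)
    (match b, b1 with Some x, Some y => Some (Z.max x y) | _, _ => None end)).
  intros s. unfold in_interval in *; simpl in *.
  destruct a, b, a1, b1; simpl in *; intuition lia.
Qed.

Lemma filter_ex (Pr : Defs.fact -> Prop) (l : list Defs.fact) :
  exists l', forall x, In x l' <-> In x l /\ Pr x.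
Proof.
  induction l as [|y l [l' IH]].
  - exists []. simpl. tauto.
  - destruct (classic (Pr y)).
    + exists (y :: l'). intros x. simpl. rewrite IH. intuition (subst; auto).
    + exists l'. intros x. simpl. rewrite IH. intuition (subst; tauto).
Qed.

Definition Mext (M : interp) (B E Q' Q : prop) (tB tE : Z) : interp :=
  fun p t => if Nat.eq_dec p B then t = tB - 1
    else if Nat.eq_dec p E then t = tE + 1
    else if Nat.eq_dec p Q' then
      (exists s, t <= s /\ s = tE + 1 /\ forall u, t < u < s -> M Q u)
    else M p t.

Theorem mainTheorem6 (P : program) (D : dataset) (Q : prop) (tB tE : Z)
    (B E Q' : prop) :
  is_dataset D -> normal_form D -> tB <= tE ->
  B <> E -> B <> Q' -> E <> Q' -> B <> Q -> E <> Q -> Q' <> Q ->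
  ~ occ_prog B P -> ~ occ_prog E P -> ~ occ_prog Q' P ->
  ~ occ_ds B D -> ~ occ_ds E D -> ~ occ_ds Q' D ->
  (~ s_int_entails P D (mkFact Q (closed_int tB tE)) <->
   exists D' : dataset, subset_ds D' D /\
     consistent (PiQ P Q B E Q')
       (fs_of (D' ++ [mkFact B (punct (tB - 1)); mkFact E (punct (tE + 1))])) /\
     forall phi, In phi D -> ~ In phi D' ->
       exists R, s_repair P D R /\ ~ In phi R).
Proof.
  intros Hds Hnf Hle HBE HBQ' HEQ' HBQ HEQ HQ'Q HoB HoE HoQ' HdB HdE HdQ'.
  split.
  - intros Hne. unfold s_int_entails, entails in Hne.
    apply not_all_ex_not in Hne. destruct Hne as [M Hne].
    apply imply_to_and in Hne. destruct Hne as [HP Hne].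
    apply imply_to_and in Hne. destruct Hne as [HI Hnq].
    unfold sat_fact in Hnq. apply not_all_ex_not in Hnq. destruct Hnq as [t0 Hnq].
    apply imply_to_and in Hnq. destruct Hnq as [Ht0 Hnq].
    unfold in_interval in Ht0; simpl in Ht0.
    destruct (filter_ex (fun g => forall R, s_repair P D R -> In g R) D) as [D' HD'].
    exists D'. split; [|split].
    + intros f Hf. apply HD' in Hf. tauto.
    + exists (Mext M B E Q' Q tB tE). split.
      * intros r Hr. unfold PiQ in Hr. apply in_app_or in Hr. destruct Hr as [Hr|Hr].
        -- revert r Hr. apply (model_prog_ext M); auto.
           intros q Hq t. unfold Mext.
           destruct (Nat.eq_dec q B); [subst; contradiction|].
           destruct (Nat.eq_dec q E); [subst; contradiction|].
           destruct (Nat.eq_dec q Q'); [subst; contradiction|]. tauto.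
        -- destruct Hr as [<-|[<-|[]]]; intros t Hb; simpl in *.
           ++ specialize (Hb _ (or_introl eq_refl)). simpl in Hb.
              destruct Hb as [s [Hs1 [Hs2 Hs3]]].
              unfold in_range in Hs1; simpl in Hs1.
              unfold Mext in *.
              destruct (Nat.eq_dec Q' B); [congruence|].
              destruct (Nat.eq_dec Q' E); [congruence|].
              destruct (Nat.eq_dec Q' Q'); [|congruence].
              destruct (Nat.eq_dec E B); [congruence|].
              destruct (Nat.eq_dec E E); [|congruence].
              exists s. split; [lia|]. split; auto.
              intros u Hu. specialize (Hs3 u Hu).
              destruct (Nat.eq_dec Q B); [congruence|].
              destruct (Nat.eq_dec Q E); [congruence|].
              destruct (Nat.eq_dec Q Q'); [congruence|]. auto.
           ++ assert (H1 := Hb _ (or_introl eq_refl)).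
              assert (H2 := Hb _ (or_intror (or_introl eq_refl))).
              simpl in H1, H2. unfold Mext in H1, H2.
              destruct (Nat.eq_dec B B); [|congruence].
              destruct (Nat.eq_dec Q' B); [congruence|].
              destruct (Nat.eq_dec Q' E); [congruence|].
              destruct (Nat.eq_dec Q' Q'); [|congruence].
              destruct H2 as [s [_ [-> Hs]]].
              apply Hnq. apply Hs. lia.
      * intros f Hf. unfold fs_of in Hf. apply in_app_or in Hf.
        destruct Hf as [Hf|[<-|[<-|[]]]].
        -- assert (HfD : In f D) by (apply HD' in Hf; tauto).
           intros t Ht. unfold Mext.
           destruct (Nat.eq_dec (fpred f) B) as [e|]; [exfalso; apply HdB; exists f; auto|].
           destruct (Nat.eq_dec (fpred f) E) as [e|]; [exfalso; apply HdE; exists f; auto|].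
           destruct (Nat.eq_dec (fpred f) Q') as [e|]; [exfalso; apply HdQ'; exists f; auto|].
           assert (Hs : sat_fact M (mkFact (fpred f) (punct t))).
           { apply HI. exists (fpred f), t. split; auto.
             intros R HR M0 _ HM0 t' Ht'. simpl in Ht'. unfold in_interval in Ht'; simpl in Ht'.
             assert (t' = t) by lia. subst t'.
             apply HD' in Hf. apply (HM0 f); [apply Hf; auto | auto]. }
           apply Hs. unfold in_interval; simpl; lia.
        -- intros t Ht. unfold in_interval in Ht; simpl in Ht. unfold Mext; simpl.
           destruct (Nat.eq_dec B B); [lia|congruence].
        -- intros t Ht. unfold in_interval in Ht; simpl in Ht. unfold Mext; simpl.
           destruct (Nat.eq_dec E B); [congruence|].
           destruct (Nat.eq_dec E E); [lia|congruence].
    + intros phi Hphi Hn.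
      assert (Hx : ~ forall R, s_repair P D R -> In phi R) by (intros H; apply Hn, HD'; auto).
      apply not_all_ex_not in Hx. destruct Hx as [R Hx].
      apply imply_to_and in Hx. exists R; exact Hx.
  - intros [D' [HD'sub [[M [HMP HMF]] Hmiss]]] Hent.
    assert (HP : model_prog M P).
    { intros r Hr. apply HMP. unfold PiQ. apply in_or_app. auto. }
    destruct (repair_exists P D) as [R0 HR0].
    { exists M. split; auto. intros f []. }
    assert (HI : model_facts M (s_int_set P D)).
    { intros f [p [t [-> Hall]]] t' Ht'. simpl in *.
      unfold in_interval in Ht'; simpl in Ht'. assert (t' = t) by lia. subst t'.
      destruct (entails_empty R0 p t (Hall R0 HR0)) as [g [Hg [Hgp Hgt]]].
      assert (HgD : In g D) by (apply (proj1 HR0); auto).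
      destruct (classic (In g D')) as [HgD'|HgD'].
      - rewrite <- Hgp. apply (HMF g); auto. unfold fs_of. apply in_or_app; auto.
      - exfalso. destruct (Hmiss g HgD HgD') as [R1 [HR1 Hn1]].
        destruct (entails_empty R1 p t (Hall R1 HR1)) as [g1 [Hg1 [Hg1p Hg1t]]].
        assert (Hg1D : In g1 D) by (apply (proj1 HR1); auto).
        apply (Hnf g g1 HgD Hg1D).
        + intros ->. contradiction.
        + congruence.
        + eapply union_interval; eauto. }
    specialize (Hent M HP HI).
    assert (HB : M B (tB - 1)).
    { apply (HMF (mkFact B (punct (tB - 1)))).
      - unfold fs_of. apply in_or_app. right. left. auto.
      - unfold in_interval; simpl; lia. }
    assert (HE : M E (tE + 1)).
    { apply (HMF (mkFact E (punct (tE + 1)))).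
      - unfold fs_of. apply in_or_app. right. right. left. auto.
      - unfold in_interval; simpl; lia. }
    assert (HQ' : M Q' (tB - 1)).
    { assert (Hr1 : sat_rule M (mkRule (HAtom (HProp Q')) [MUntil (mkRange 0 None) (MProp Q) (MProp E)])).
      { apply HMP. unfold PiQ. apply in_or_app. right. left. auto. }
      apply (Hr1 (tB - 1)). intros b [<-|[]]. simpl.
      exists (tE + 1). split; [unfold in_range; simpl; split; [lia|auto]|].
      split; auto. intros u Hu. apply Hent. unfold in_interval; simpl; lia. }
    assert (Hr2 : sat_rule M (mkRule HBot [MProp B; MProp Q'])).
    { apply HMP. unfold PiQ. apply in_or_app. right. right. left. auto. }
    apply (Hr2 (tB - 1)). intros b [<-|[<-|[]]]; simpl; auto.
Qed.
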